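(* Let $N$ be an NFA, let $L_0$ be a forward-admissible initial partition of its vertex set $V$, and let $L$ be the partition output by the forward refinement algorithm started from $L_0$. For a finite sequence $\tau$ over $A\cup\{\varepsilon\}$ let $R(\tau)$ be the set of vertices reachable on $\tau$ from the starting vertex $v_s$. Then for every such $\tau$ and every $Z\in L$, either $Z\subseteq R(\tau)$ or $Z\cap R(\tau)=\emptyset$.
   Context: An NFA $N$ over a finite alphabet $A$ consists of a finite vertex set $V$, a starting vertex $v_s\in V$, accepting action sets for the vertices, and a set of labeled edges $v\xrightarrow{\lambda}w$ with $v,w\in V$ and $\lambda\in A\cup\{\varepsilon\}$. For a vertex $u$ and a finite sequence $\tau=\tau_1\cdots\tau_r$ ($r\ge0$) with $\tau_i\in A\cup\{\varepsilon\}$, a vertex $w$ is reachable from $u$ on $\tau$ if there are vertices $u=v_1,\dots,v_{r+1}=w$ with an edge $v_i\xrightarrow{\tau_i}v_{i+1}$ for each $i$. A partition $L_0$ of $V$ is a forward-admissible initial partition if $\{v_s\}\in L_0$. Refining a partition $P$ of $V$ by a subset $Y\subseteq V$ means replacing $P$ by the nonempty sets among $\{B\cap Y, B\setminus Y : B\in P\}$. Forward refinement algorithm: given $L_i$, for each $Z\in L_i$ and each $\sigma\in A\cup\{\varepsilon\}$ let $Z[\sigma]=\{z\in V: z'\xrightarrow{\sigma}z\text{ for some }z'\in Z\}$; $L_{i+1}$ is obtained from $L_i$ by refining successively by all these sets $Z[\sigma]$. Repeat until $L_{i+1}=L_i$ and output this converged partition $L$. *)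

(* Defs.v *)
From mathcomp Require Import all_boot.
Set Implicit Arguments. Unset Strict Implicit. Unset Printing Implicit Defensive.

(* An NFA is given by a finite vertex type V, a finite alphabet A, labels in
   option A (None = epsilon), an edge relation [edge v l w] for v -l-> w, and a
   starting vertex. Accepting action sets play no role in the statement. *)

Section NFA.
Variables (V A : finType) (edge : V -> option A -> V -> bool).

Fixpoint reachable (u : V) (tau : seq (option A)) (w : V) : Prop :=
  match tau with
  | [::] => u = w
  | s :: tau' => exists v, edge u s v /\ reachable v tau' w
  end.

Definition succ_set (Z : {set V}) (s : option A) : {set V} :=
  [set z | [exists z', (z' \in Z) && edge z' s z]].

Definition refine (P : {set {set V}}) (Y : {set V}) : {set {set V}} :=
  ([set B :&: Y | B in P] :|: [set B :\: Y | B in P]) :\ set0.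

Definition fwd_step (P : {set {set V}}) : {set {set V}} :=
  foldl refine P [seq succ_set Z s | Z <- enum P, s <- enum {: option A}].

Definition fwd_iter (L0 : {set {set V}}) (n : nat) : {set {set V}} :=
  iter n fwd_step L0.

End NFA.

(* Main.v *)
Require Import Defs.
From mathcomp Require Import all_boot.
Set Implicit Arguments. Unset Strict Implicit.

Section Aux.
Variables (V A : finType) (edge : V -> option A -> V -> bool).

Definition cov (P : {set {set V}}) : Prop := forall v, exists B, B \in P /\ v \in B.

Lemma refine_mem (P : {set {set V}}) (Y B : {set V}) : B \in refine P Y ->
  B != set0 /\ exists2 C, C \in P & (B = C :&: Y \/ B = C :\: Y).
Proof.
rewrite /refine !inE => /andP[nB /orP[]] /imsetP[C CP eB]; (split; [by []| exists C => //]); by [left|right].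
Qed.

Lemma refine_cov (P : {set {set V}}) (Y : {set V}) : cov P -> cov (refine P Y).
Proof.
move=> cP v; have [B [BP vB]] := cP v.
case vY: (v \in Y).
- exists (B :&: Y); rewrite /refine !inE; split; last by rewrite ?inE vB vY.
  apply/andP; split; first by apply/set0Pn; exists v; rewrite ?inE vB vY.
  by apply/orP; left; apply: imset_f.
- exists (B :\: Y); rewrite /refine !inE; split; last by rewrite ?inE vB vY.
  apply/andP; split; first by apply/set0Pn; exists v; rewrite ?inE vB vY.
  by apply/orP; right; apply: imset_f.
Qed.

Lemma refine_sub (P : {set {set V}}) (Y B : {set V}) : B \in refine P Y -> exists2 C, C \in P & B \subset C.
Proof.
move=> /refine_mem [_ [C CP [->|->]]]; exists C => //.
  exact: subsetIl. exact: subsetDl.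
Qed.

Lemma refine_sep (P : {set {set V}}) (Y B : {set V}) : B \in refine P Y -> B \subset Y \/ [disjoint B & Y].
Proof.
move=> /refine_mem [_ [C CP [->|->]]]; [left; exact: subsetIr|right].
by rewrite disjoint_sym disjoints_subset setCD subsetUr.
Qed.

Lemma foldl_cov (ys : seq {set V}) (P : {set {set V}}) : cov P -> cov (foldl (@refine V) P ys).
Proof. elim: ys P => //= y ys IH P cP; apply: IH; exact: refine_cov. Qed.

Lemma foldl_sub (ys : seq {set V}) (P : {set {set V}}) (B : {set V}) : B \in foldl (@refine V) P ys -> exists2 C, C \in P & B \subset C.
Proof.
elim: ys P B => [|y ys IH] P B /=; first by move=> BP; exists B.
move=> /IH [C /refine_sub [D DP CD] BC]; exists D => //; exact: subset_trans BC CD.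
Qed.

Lemma foldl_sep (ys : seq {set V}) (P : {set {set V}}) (B Y : {set V}) : Y \in ys -> B \in foldl (@refine V) P ys ->
  B \subset Y \/ [disjoint B & Y].
Proof.
elim: ys P => [|y ys IH] P //=; rewrite inE => /orP[/eqP ->|Yys] Bf; last exact: IH Yys Bf.
have [C /refine_sep [CY|CY] BC] := foldl_sub Bf.
  by left; exact: subset_trans BC CY.
by right; exact: disjointWl BC CY.
Qed.

Lemma iter_cov (L0 : {set {set V}}) n : cov L0 -> cov (fwd_iter edge L0 n).
Proof. elim: n => //= n IH cL; exact: foldl_cov (IH cL). Qed.

Lemma iter_sub (L0 : {set {set V}}) n (B : {set V}) : B \in fwd_iter edge L0 n -> exists2 C, C \in L0 & B \subset C.
Proof.
elim: n B => [|n IH] B /=; first by move=> BP; exists B.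
move=> /foldl_sub [C /IH [D DP CD] BC]; exists D => //; exact: subset_trans BC CD.
Qed.

Definition ublocks (L : {set {set V}}) (X : {set V}) :=
  forall B, B \in L -> B \subset X \/ [disjoint B & X].

Lemma main_gen (L : {set {set V}}) :
  cov L ->
  (forall Z s, Z \in L -> ublocks L (succ_set edge Z s)) ->
  forall tau X, ublocks L X -> forall B, B \in L ->
    (forall b, b \in B -> exists u, u \in X /\ reachable edge u tau b) \/
    (forall b, b \in B -> ~ exists u, u \in X /\ reachable edge u tau b).
Proof.
move=> cL sepL; elim=> [|s tau IH] X uX B BL /=.
  case: (uX B BL) => [BX|BX]; [left|right] => b bB.
    by exists b; split => //; exact: (subsetP BX).
  move=> [u [uX0 e0]]; subst u; by rewrite (disjointFr BX bB) in uX0.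
set X' := [set v | [exists u, (u \in X) && edge u s v]].
have uX' : ublocks L X'.
  move=> C CL; case: (boolP [disjoint C & X']) => [D|]; first by right.
  rewrite -setI_eq0 => /set0Pn [v]; rewrite !inE => /andP[vC /existsP[u /andP[uX0 e]]].
  have [Z [ZL uZ]] := cL u.
  have ZX : Z \subset X.
    case: (uX Z ZL) => // ZX; by rewrite (disjointFr ZX uZ) in uX0.
  case: (sepL Z s ZL C CL) => [CZ|CZ]; last first.
    have : v \in succ_set edge Z s by rewrite inE; apply/existsP; exists u; rewrite uZ.
    by rewrite (disjointFr CZ vC).
  left; apply/subsetP => c cC; move: (subsetP CZ c cC); rewrite !inE.
  move=> /existsP[u' /andP[u'Z e']]; apply/existsP; exists u'.
  by rewrite e' (subsetP ZX).
case: (IH X' uX' B BL) => [H|H]; [left|right] => b bB.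
  have [v [vX' r]] := H b bB; move: vX'; rewrite inE => /existsP[u /andP[uX0 e]].
  by exists u; split => //; exists v.
move=> [u [uX0 [v [e r]]]]; apply: (H b bB); exists v; split => //.
by rewrite inE; apply/existsP; exists u; rewrite uX0.
Qed.

End Aux.

Theorem mainTheorem6 (V A : finType) (edge : V -> option A -> V -> bool)
    (vs : V) (L0 : {set {set V}}) (n : nat) :
  partition L0 [set: V] ->
  [set vs] \in L0 ->
  (* the algorithm has converged after n rounds; L is its output *)
  fwd_step edge (fwd_iter edge L0 n) = fwd_iter edge L0 n ->
  forall (tau : seq (option A)) (Z : {set V}),
    Z \in fwd_iter edge L0 n ->
    (forall z, z \in Z -> reachable edge vs tau z) \/
    (forall z, z \in Z -> ~ reachable edge vs tau z).
Proof.
move=> partL0 vsL0 fixL tau Z ZL.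
set L := fwd_iter edge L0 n in fixL ZL *.
have cL0 : cov L0.
  move=> v; have : v \in cover L0 by rewrite (cover_partition partL0) inE.
  by move=> /bigcupP[B BP vB]; exists B.
have cL : cov L by exact: iter_cov.
have sepL : forall Z s, Z \in L -> ublocks L (succ_set edge Z s).
  move=> Z' s Z'L B BL; rewrite -fixL in BL.
  apply: (foldl_sep _ BL); apply: allpairs_f; by rewrite ?mem_enum.
have uvs : ublocks L [set vs].
  move=> B BL; case: (boolP (vs \in B)) => vB; last first.
    by right; rewrite disjoint_sym disjoints_subset sub1set inE.
  left; have [C CL0 BC] := iter_sub BL.
  have := partition_trivIset partL0 => /trivIsetP tI.
  case: (eqVneq C [set vs]) => [<- //|neq].
  have := tI _ _ CL0 vsL0 neq; move=> /disjointFr; move=> /(_ vs).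
  by rewrite set11 (subsetP BC vs vB) => /(_ isT).
case: (main_gen cL sepL tau uvs ZL) => [H|H]; [left|right] => z zZ.
  by have [u [/set1P -> r]] := H z zZ.
by move=> r; apply: (H z zZ); exists vs; rewrite set11.
Qed.
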